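(* Let $d\ge2$, $n=3$, and $\mathcal T=\sum_{k=1}^4\mathbf v_k^{\otimes d}$. (i) If $d=2$, every unit vector $\mathbf v\in\mathbb R^3$ is an eigenvector with eigenvalue $\frac43$. (ii) If $d\ge3$ is odd, a unit vector $\mathbf v\in\mathbb R^3$ is an eigenvector of $\mathcal T$ if and only if there is a nonempty $K\subset\{1,2,3,4\}$ with $|K|\le3$ such that $\mathbf v=\sum_{k\in K}\mathbf v_k\big/\sqrt{|K|(4-|K|)/3}$, with eigenvalue $\mu=\dfrac{(4-|K|)^{d-1}-|K|^{d-1}}{3^{d/2}(|K|(4-|K|))^{d/2-1}}$. Moreover $\mu=0$ if and only if $|K|=2$, and the normalized eigenvectors with eigenvalue $0$ are, up to sign, exactly the three linearly independent vectors $(\mathbf v_1+\mathbf v_2)/\sqrt{4/3}$, $(\mathbf v_1+\mathbf v_3)/\sqrt{4/3}$, $(\mathbf v_1+\mathbf v_4)/\sqrt{4/3}$. (iii) If $d\ge4$ is even, a unit vector $\mathbf v\in\mathbb R^3$ is an eigenvector of $\mathcal T$ if and only if either (a) there is a nonempty $K\subset\{1,2,3,4\}$ with $|K|\le3$ such that $\mathbf v=\sum_{k\in K}\mathbf v_k/\sqrt{|K|(4-|K|)/3}$, with positive eigenvalue $\mu=\dfrac{(4-|K|)^{d-1}+|K|^{d-1}}{3^{d/2}(|K|(4-|K|))^{d/2-1}}$; or (b) there are nonempty disjoint $K_1,K_2\subset\{1,2,3,4\}$ with $|K_1\cup K_2|\le3$ and numbers $0<a\le s^*<b\le1$ with $|K_1|a+|K_2|b=1$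 and $g(a)/a=g(b)/b$, such that $\mathbf v=\big(a\sum_{k\in K_1}\mathbf v_k+b\sum_{k\in K_2}\mathbf v_k\big)\big/\sqrt{(4a^2|K_1|+4b^2|K_2|-1)/3}$, with positive eigenvalue $\mu=\dfrac{|K_1|(4a-1)^d+|K_2|(4b-1)^d+4-|K_1|-|K_2|}{3^{d/2}(4a^2|K_1|+4b^2|K_2|-1)^{d/2}}$.
   Context: Simplex frame for $n=3$: $\mathbf v_k=\sqrt{4/3}\,\mathbf e_k-3^{-3/2}\,\mathbf 1_3$ for $k=1,2,3$ and $\mathbf v_4=-\frac1{\sqrt3}\mathbf 1_3$, where $\mathbf e_k$ are unit vectors of $\mathbb R^3$ and $\mathbf 1_3=(1,1,1)^\top$; these are unit vectors with pairwise inner product $-\frac13$ and sum $\mathbf 0$. $\mathcal T\cdot\mathbf v^{d-1}=\sum_{k=1}^4\langle\mathbf v,\mathbf v_k\rangle^{d-1}\mathbf v_k$; $\mathbf v\ne\mathbf 0$ is an eigenvector with eigenvalue $\mu$ if $\mathcal T\cdot\mathbf v^{d-1}=\mu\mathbf v$. $g(s)=(4s-1)^{d-1}-(-1)^{d-1}$, and for even $d\ge4$, $s^*\in[\frac13,\frac12)$ is the unique point such that $g(s)/s$ is strictly decreasing on $[0,s^*]$ and strictly increasing on $[s^*,\infty)$. *)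

(* Defs.v *)
From HB Require Import structures.
From mathcomp Require Import all_boot all_order all_algebra.
From mathcomp Require Import reals.
Set Implicit Arguments. Unset Strict Implicit. Unset Printing Implicit Defensive.
Import Order.TTheory GRing.Theory Num.Theory.
Local Open Scope ring_scope.

Section SimplexFrame.
Context {R : realType}.

Definition dot (u v : 'rV[R]_3) : R := \sum_(i < 3) u 0 i * v 0 i.

Definition unitv (v : 'rV[R]_3) : Prop := dot v v = 1.

(* simplex frame: k = 0,1,2 correspond to v_1,v_2,v_3; k = 3 to v_4 *)
Definition vk (k : 'I_4) : 'rV[R]_3 :=
  if (k < 3)%N then
    Num.sqrt (4 / 3) *: delta_mx 0 (inord k : 'I_3)
      - (3 * Num.sqrt 3)^-1 *: const_mx 1
  else - (Num.sqrt 3)^-1 *: const_mx 1.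

(* T . v^{d-1} = sum_k <v, v_k>^{d-1} v_k *)
Definition Tapply (d : nat) (v : 'rV[R]_3) : 'rV[R]_3 :=
  \sum_(k < 4) (dot v (vk k)) ^+ d.-1 *: vk k.

Definition eigenpair (d : nat) (v : 'rV[R]_3) (mu : R) : Prop :=
  v != 0 /\ Tapply d v = mu *: v.

Definition g (d : nat) (s : R) : R := (4 * s - 1) ^+ d.-1 - (-1) ^+ d.-1.

Definition is_sstar (d : nat) (s : R) : Prop :=
  1 / 3 <= s < 1 / 2 /\
  (forall x y, 0 < x -> x < y -> y <= s -> g d y / y < g d x / x) /\
  (forall x y, s <= x -> x < y -> g d x / x < g d y / y).

Definition sumv (K : {set 'I_4}) : 'rV[R]_3 := \sum_(k in K) vk k.

Definition vK (K : {set 'I_4}) : 'rV[R]_3 :=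
  (Num.sqrt (#|K|%:R * (4 - #|K|%:R) / 3))^-1 *: sumv K.

Definition qK (K1 K2 : {set 'I_4}) (a b : R) : R :=
  4 * a ^+ 2 * #|K1|%:R + 4 * b ^+ 2 * #|K2|%:R - 1.

Definition vK2 (K1 K2 : {set 'I_4}) (a b : R) : 'rV[R]_3 :=
  (Num.sqrt (qK K1 K2 a b / 3))^-1 *: (a *: sumv K1 + b *: sumv K2).

(* 3^{d/2} (|K|(4-|K|))^{d/2-1}, written with square roots *)
Definition denK (d : nat) (K : {set 'I_4}) : R :=
  Num.sqrt 3 ^+ d * Num.sqrt (#|K|%:R * (4 - #|K|%:R)) ^+ (d - 2).

Definition mu_odd (d : nat) (K : {set 'I_4}) : R :=
  ((4 - #|K|%:R) ^+ d.-1 - #|K|%:R ^+ d.-1) / denK d K.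

Definition mu_even (d : nat) (K : {set 'I_4}) : R :=
  ((4 - #|K|%:R) ^+ d.-1 + #|K|%:R ^+ d.-1) / denK d K.

Definition mu_even2 (d : nat) (K1 K2 : {set 'I_4}) (a b : R) : R :=
  (#|K1|%:R * (4 * a - 1) ^+ d + #|K2|%:R * (4 * b - 1) ^+ d
     + 4 - #|K1|%:R - #|K2|%:R)
  / (Num.sqrt 3 ^+ d * Num.sqrt (qK K1 K2 a b) ^+ d).

Definition wzero (j : 'I_3) : 'rV[R]_3 :=
  (Num.sqrt (4 / 3))^-1 *: (vk 0 + vk (lift ord0 j)).

Definition condK (K : {set 'I_4}) : Prop := (0 < #|K| <= 3)%N.

Definition condK2 (d : nat) (sstar : R) (K1 K2 : {set 'I_4}) (a b : R) : Prop :=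
  (0 < #|K1|)%N /\ (0 < #|K2|)%N /\ [disjoint K1 & K2] /\ (#|K1 :|: K2| <= 3)%N /\
  (0 < a /\ a <= sstar /\ sstar < b /\ b <= 1) /\
  #|K1|%:R * a + #|K2|%:R * b = 1 /\
  g d a / a = g d b / b.

End SimplexFrame.

(* Main.v *)
Require Import Defs.
From HB Require Import structures.
From mathcomp Require Import all_boot all_order all_algebra.
From mathcomp Require Import reals.
From mathcomp Require Import polyrcf.
From mathcomp Require Import ring lra zify.
Import Order.TTheory GRing.Theory Num.Theory.
Local Open Scope ring_scope.

Set Implicit Arguments. Unset Strict Implicit.
Section S.
Variable R : realType.
Local Notation rt := (Num.sqrt (3:R)).
Implicit Types (u w v : 'rV[R]_3) (a b x y p q s t lam c : R).

Lemma rt_gt0 : 0 < rt. Proof. by rewrite sqrtr_gt0. Qed.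
Lemma rt2 : rt ^+ 2 = 3. Proof. by rewrite sqr_sqrtr. Qed.
Lemma rt_neq0 : rt != 0. Proof. by rewrite gt_eqF // rt_gt0. Qed.

Lemma sq43 : Num.sqrt (4/3 : R) = 2 / rt.
Proof.
have -> : (4/3 : R) = (2/rt)^+2.
  by rewrite expr_div_n rt2; field.
by rewrite sqrtr_sqr ger0_norm // divr_ge0 // ltW // rt_gt0.
Qed.

Definition o0 : 'I_4 := @Ordinal 4 0 isT.
Definition o1 : 'I_4 := @Ordinal 4 1 isT.
Definition o2 : 'I_4 := @Ordinal 4 2 isT.
Definition o3 : 'I_4 := @Ordinal 4 3 isT.

Lemma ord4P (k : 'I_4) : k = o0 \/ k = o1 \/ k = o2 \/ k = o3.
Proof.
case: k => [[|[|[|[|n]]]] h]; [left|right;left|right;right;left|right;right;right|by []];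
  by apply/val_inj.
Qed.

Lemma sum4 (F : 'I_4 -> R) : \sum_(k < 4) F k = F o0 + F o1 + F o2 + F o3.
Proof.
rewrite !big_ord_recl big_ord0 addr0 !addrA.
by congr (_ + _ + _ + _); congr F; apply/val_inj.
Qed.

Lemma sum3 (F : 'I_3 -> R) : \sum_(k < 3) F k = F 0 + F 1 + F 2.
Proof.
rewrite !big_ord_recl big_ord0 addr0 !addrA.
by congr (_ + _ + _); congr F; apply/val_inj.
Qed.

Definition uk (k : 'I_4) : 'rV[R]_3 :=
  \row_(i < 3) (if (k < 3)%N then 2 * ((i:nat) == k)%:R - 1/3 else -1).

Lemma vk_uk k : vk k = rt^-1 *: uk k.
Proof.
apply/rowP => i; rewrite /vk /uk !mxE.
case: ifP => hk; rewrite !mxE.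
- rewrite sq43 /= -(inj_eq val_inj) /= inordK //.
  field; exact: rt_neq0.
- by rewrite mulr1 mulrN1.
Qed.


Lemma ord3P (i : 'I_3) : i = 0 \/ i = 1 \/ i = 2.
Proof.
case: i => [[|[|[|n]]] h]; [left|right;left|right;right|by []]; by apply/val_inj.
Qed.

Lemma dotC u w : dot u w = dot w u.
Proof. by rewrite /dot; apply: eq_bigr => i _; rewrite mulrC. Qed.

Lemma dotZl a u w : dot (a *: u) w = a * dot u w.
Proof. by rewrite /dot mulr_sumr; apply: eq_bigr => i _; rewrite mxE mulrA. Qed.

Lemma dotZr a u w : dot u (a *: w) = a * dot u w.
Proof. by rewrite dotC dotZl dotC. Qed.

Lemma dotDl u u' w : dot (u + u') w = dot u w + dot u' w.
Proof. by rewrite /dot -big_split; apply: eq_bigr => i _; rewrite mxE mulrDl. Qed.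

Lemma dotNl u w : dot (- u) w = - dot u w.
Proof. by rewrite -scaleN1r dotZl mulN1r. Qed.

Lemma dot0l w : dot 0 w = 0.
Proof. by rewrite /dot big1 // => i _; rewrite mxE mul0r. Qed.

Lemma dot_suml (F : 'I_4 -> 'rV[R]_3) w :
  dot (\sum_(k < 4) F k) w = \sum_(k < 4) dot (F k) w.
Proof.
rewrite /dot; under eq_bigr do rewrite summxE mulr_suml.
by rewrite exchange_big.
Qed.

Lemma dotE u w : dot u w = u 0 0 * w 0 0 + u 0 1 * w 0 1 + u 0 2 * w 0 2.
Proof. by rewrite /dot sum3. Qed.

Lemma gram_u j k : dot (uk j) (uk k) = if j == k then 3 else -1.
Proof.
case: (ord4P j) => [->|[->|[->|->]]]; case: (ord4P k) => [->|[->|[->|->]]];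
  rewrite dotE !mxE /=.
all: lra.
Qed.


Lemma rtinv2 : rt^-1 * rt^-1 = 1/3 :> R.
Proof. by rewrite -invfM -expr2 rt2 div1r. Qed.

Lemma gram j k : dot (@vk R j) (vk k) = if j == k then 1 else -1/3.
Proof.
rewrite !vk_uk dotZl dotZr gram_u mulrA rtinv2.
by case: ifP => _; lra.
Qed.

Lemma sum_uk : \sum_(k < 4) @uk k = 0.
Proof.
apply/rowP => i; rewrite summxE sum4 !mxE.
by case: (ord3P i) => [->|[->|->]] /=; lra.
Qed.

Lemma sum_vk : \sum_(k < 4) @vk R k = 0.
Proof.
under eq_bigr do rewrite vk_uk. by rewrite -scaler_sumr sum_uk scaler0.
Qed.

Lemma frame_u v : v = (1/4) *: \sum_(k < 4) dot v (uk k) *: uk k.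
Proof.
apply/rowP => i; rewrite !mxE summxE sum4 !mxE !dotE !mxE.
by case: (ord3P i) => [->|[->|->]] /=; lra.
Qed.

Definition X v k := dot v (vk k).

Lemma frame v : v = (3/4) *: \sum_(k < 4) X v k *: vk k.
Proof.
have H k : X v k *: vk k = (1/3) *: (dot v (uk k) *: uk k).
  rewrite /X vk_uk dotZr !scalerA; congr (_ *: _).
  by rewrite -rtinv2; ring.
under eq_bigr do rewrite H.
rewrite -scaler_sumr scalerA {1}[v]frame_u; congr (_ *: _); lra.
Qed.

Lemma Xvk j k : X (vk j) k = if j == k then 1 else -1/3 :> R.
Proof. exact: gram. Qed.

Lemma X_lin (y : 'I_4 -> R) k :
  X (\sum_(j < 4) y j *: vk j) k = 4/3 * y k - 1/3 * \sum_(j < 4) y j.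
Proof.
rewrite /X dot_suml.
under eq_bigr do rewrite dotZl gram.
rewrite sum4 sum4.
by case: (ord4P k) => [->|[->|[->|->]]] /=; lra.
Qed.

Lemma sumX v : \sum_(k < 4) X v k = 0.
Proof.
transitivity (dot (\sum_(k < 4) vk k) v); last by rewrite sum_vk dot0l.
by rewrite dot_suml; apply: eq_bigr => k _; rewrite /X dotC.
Qed.

Lemma X_inj v w : (forall k, X v k = X w k) -> v = w.
Proof.
by move=> H; rewrite [v]frame [w]frame; under eq_bigr do rewrite H.
Qed.

Lemma dotvv v : dot v v = 3/4 * \sum_(k < 4) X v k ^+ 2.
Proof.
rewrite {1}[v]frame dotZl dot_suml; congr (_ * _).
by apply: eq_bigr => k _; rewrite dotZl expr2 /X dotC.
Qed.

Lemma ker (y : 'I_4 -> R) : \sum_(j < 4) y j *: vk j = 0 ->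
  forall k, y k = y o0.
Proof.
move=> H k.
have E l : 4/3 * y l - 1/3 * \sum_(j < 4) y j = 0.
  by rewrite -X_lin H /X dot0l.
have := E k; have := E o0; lra.
Qed.

Lemma XZ a v k : X (a *: v) k = a * X v k.
Proof. by rewrite /X dotZl. Qed.
Lemma XD v w k : X (v + w) k = X v k + X w k.
Proof. by rewrite /X dotDl. Qed.
Lemma XN v k : X (- v) k = - X v k.
Proof. by rewrite /X dotNl. Qed.



Lemma sumXvk v : \sum_(k < 4) X v k *: vk k = (4/3) *: v.
Proof. by rewrite {2}[v]frame scalerA (_ : 4/3*(3/4) = 1 :> R) ?scale1r //; lra. Qed.

Lemma eig_iff d v mu : Tapply d v = mu *: v <->
  forall k, X v k ^+ d.-1 - 3/4*mu * X v k = X v o0 ^+ d.-1 - 3/4*mu * X v o0.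
Proof.
set y := fun k => X v k ^+ d.-1 - 3/4*mu * X v k.
have Hy : \sum_(k < 4) y k *: vk k = Tapply d v - mu *: v.
  rewrite /y; under eq_bigr do rewrite scalerBl -scalerA.
  rewrite sumrB -scaler_sumr sumXvk scalerA /Tapply /X; congr (_ - _ *: _).
  lra.
split.
- by move=> H; apply: ker; rewrite Hy H subrr.
- move=> H; apply/eqP; rewrite -subr_eq0 -Hy.
  under eq_bigr do rewrite (H _ : y _ = y o0).
  by rewrite -scaler_sumr sum_vk scaler0.
Qed.


End S.
Set Implicit Arguments. Unset Strict Implicit.
Section S.
Variable R : realType.
Local Notation rt := (Num.sqrt (3:R)).
Implicit Types (u w v : 'rV[R]_3) (a b x y p q s t lam c : R).
Lemma odd_pow_lt n x y : odd n -> x < y -> x ^+ n < y ^+ n.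
Proof.
move=> hn lt_xy.
have n0 : n != 0%N by case: n hn.
have [x0|x0] := leP 0 x.
  by rewrite ltrXn2r.
have [y0|y0] := leP 0 y.
  apply: (@lt_le_trans _ _ 0); first by rewrite exprn_odd_lt0.
  by rewrite exprn_odd_ge0.
have h1 : 0 <= - y by rewrite oppr_ge0 ltW.
have h2 : - y < - x by rewrite ltrN2.
have := ltrXn2r n h1 h2; rewrite n0 => h.
move: h; rewrite (exprNn y) (exprNn x) -(signr_odd _ n) hn expr1 !mulN1r ltrN2.
done.
Qed.

Definition Pm (m : nat) (lam : R) : {poly R} := 'X^m - lam *: 'X.

Lemma PmE m lam t : (Pm m lam).[t] = t ^+ m - lam * t.
Proof. by rewrite /Pm !hornerE. Qed.

Lemma Pm'E m lam t : (Pm m lam)^`().[t] = t ^+ m.-1 *+ m - lam.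
Proof. by rewrite /Pm derivB derivXn derivZ derivX hornerD hornerN hornerMn hornerXn hornerZ hornerC mulr1. Qed.

Lemma Pm''E m lam t : (Pm m lam)^`()^`().[t] = t ^+ m.-2 *+ m.-1 *+ m.
Proof.
rewrite /Pm !derivB derivXn derivZ derivX derivMn derivXn -polyC1 derivZ derivC scaler0 subr0.
by rewrite hornerMn hornerMn hornerXn.
Qed.

Lemma inoo a b c : c \in `]a, b[ -> a < c /\ c < b.
Proof. by rewrite in_itv /= => /andP[]. Qed.

Lemma natmul_inj m x y : (0 < m)%N -> x *+ m = y *+ m -> x = y.
Proof.
move=> m0; rewrite -(mulr_natr x) -(mulr_natr y) => /mulIf; apply.
by rewrite pnatr_eq0 -lt0n.
Qed.

Lemma odd_pred m : (0 < m)%N -> ~~ odd m -> odd m.-1.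
Proof. by case: m => [//|m] _ /= /negPn. Qed.

Lemma even_pred m : odd m -> ~~ odd m.-1.
Proof. by case: m. Qed.

Lemma no3 m lam p q s : ~~ odd m -> (2 <= m)%N -> p < q -> q < s ->
  p ^+ m - lam * p = q ^+ m - lam * q -> q ^+ m - lam * q = s ^+ m - lam * s -> False.
Proof.
move=> em m2 pq qs e1 e2.
have e1' : (Pm m lam).[p] = (Pm m lam).[q] by rewrite !PmE.
have e2' : (Pm m lam).[q] = (Pm m lam).[s] by rewrite !PmE.
have [c1 /inoo [h1 h2] r1] := poly_rolle pq e1'.
have [c2 /inoo [h3 h4] r2] := poly_rolle qs e2'.
move: r1 r2; rewrite !Pm'E => r1 r2.
have H : c1 ^+ m.-1 *+ m = c2 ^+ m.-1 *+ m.
  by apply/eqP; rewrite -subr_eq0; apply/eqP; lra.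
have m0 : (0 < m)%N by apply: leq_trans m2.
have {}H := natmul_inj m0 H.
have om : odd m.-1 by apply: odd_pred.
have := odd_pow_lt om (lt_trans h2 h3).
by rewrite H ltxx.
Qed.

Lemma no4 m lam p q s t : odd m -> (3 <= m)%N -> p < q -> q < s -> s < t ->
  p ^+ m - lam * p = q ^+ m - lam * q -> q ^+ m - lam * q = s ^+ m - lam * s ->
  s ^+ m - lam * s = t ^+ m - lam * t -> False.
Proof.
move=> om m3 pq qs st e1 e2 e3.
have e1' : (Pm m lam).[p] = (Pm m lam).[q] by rewrite !PmE.
have e2' : (Pm m lam).[q] = (Pm m lam).[s] by rewrite !PmE.
have e3' : (Pm m lam).[s] = (Pm m lam).[t] by rewrite !PmE.
have [c1 /inoo [h1 h2] r1] := poly_rolle pq e1'.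
have [c2 /inoo [h3 h4] r2] := poly_rolle qs e2'.
have [c3 /inoo [h5 h6] r3] := poly_rolle st e3'.
have f1 : (Pm m lam)^`().[c1] = (Pm m lam)^`().[c2] by rewrite r1 r2.
have f2 : (Pm m lam)^`().[c2] = (Pm m lam)^`().[c3] by rewrite r3 r2.
have [e5 /inoo [k1 k2] z1] := poly_rolle (lt_trans h2 h3) f1.
have [e6 /inoo [k3 k4] z2] := poly_rolle (lt_trans h4 h5) f2.
have Z e : (Pm m lam)^`()^`().[e] = 0 -> e = 0.
  have m0 : (0 < m)%N by rewrite (ltn_trans _ m3).
  have m1 : (0 < m.-1)%N by rewrite -subn1 subn_gt0 (ltn_trans _ m3).
  have m2 : (0 < m.-2)%N by rewrite -subn2 subn_gt0.
  rewrite Pm''E => /eqP; rewrite !mulrn_eq0 expf_eq0 m2 !eqn0Ngt m0 m1 /=.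
  by move/eqP.
have := Z _ z1; have := Z _ z2 => E1 E2.
by move: (lt_trans k2 k3); rewrite E1 E2 ltxx.
Qed.
End S.
Set Implicit Arguments. Unset Strict Implicit.
Section S.
Variable R : realType.
Implicit Types (u w v : 'rV[R]_3) (a b x y p q s t lam c z ga al be : R).

Definition ind (K : {set 'I_4}) (k : 'I_4) : R := if k \in K then 1 else 0.

Lemma sum_ind K : \sum_(k < 4) ind K k = #|K|%:R.
Proof.
rewrite /ind -big_mkcond /= sumr_const.
by rewrite -[X in _ = X]mulr1 mulr_natl.
Qed.

Lemma sum_lin K1 K2 A B C :
  \sum_(k < 4) (C + ind K1 k * A + ind K2 k * B) =
  4 * C + #|K1|%:R * A + #|K2|%:R * B.
Proof.
rewrite !big_split /= -!mulr_suml !sum_ind sumr_const card_ord.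
by rewrite -(mulr_natl C 4).
Qed.

Lemma sumv_ind K : sumv K = \sum_(k < 4) ind K k *: vk k.
Proof.
rewrite /sumv big_mkcond /=; apply: eq_bigr => k _.
by rewrite /ind; case: ifP => _; rewrite ?scale1r ?scale0r.
Qed.

Lemma X_sumv K k : X (sumv K) k = 4/3 * ind K k - 1/3 * #|K|%:R.
Proof. by rewrite sumv_ind X_lin sum_ind. Qed.

Lemma card_le4 (K : {set 'I_4}) : (#|K| <= 4)%N.
Proof. by have := max_card (mem K); rewrite card_ord. Qed.


Definition cK (n : R) := Num.sqrt (n * (4 - n) / 3).

Lemma cK2 n : 0 <= n -> n <= 4 -> cK n ^+ 2 = n * (4 - n) / 3.
Proof. by move=> h1 h2; rewrite sqr_sqrtr //; apply: divr_ge0 => //; nra. Qed.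

Lemma cK_gt0 n : 0 < n -> n < 4 -> 0 < cK n.
Proof. by move=> h1 h2; rewrite sqrtr_gt0; apply: divr_gt0 => //; nra. Qed.

Lemma X_vK K k : X (vK K) k =
  (if k \in K then 4 - #|K|%:R else - #|K|%:R) / (3 * cK #|K|%:R).
Proof.
rewrite /vK XZ X_sumv /ind -/(cK _) invfM.
by case: ifP => _; ring.
Qed.

Lemma two_alg n al be : 0 < n -> n < 4 -> n * al + (4 - n) * be = 0 ->
  n * al ^+ 2 + (4 - n) * be ^+ 2 = 4/3 -> be < al ->
  al = (4 - n) / (3 * cK n) /\ be = - n / (3 * cK n).
Proof.
move=> n0 n4 e1 e2 ba.
have c2 := cK2 (ltW n0) (ltW n4).
have c0 := cK_gt0 n0 n4.
set c := cK n in c2 c0 *.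
have a0 : 0 < al.
  rewrite ltNge; apply/negP => ha.
  have hb : be < 0 by apply: lt_le_trans ha.
  nra.
have h : (4 - n) * be = - (n * al) by lra.
have a2 : 4 * n * al ^+ 2 = 4/3 * (4 - n).
  have : ((4 - n) * be) ^+ 2 = (n * al) ^+ 2 by rewrite h sqrrN.
  rewrite !exprMn => h3.
  have h5 : (4 - n) * (n * al ^+ 2 + (4 - n) * be ^+ 2) = (4 - n) * (4/3) by rewrite e2.
  lra.
have T0 : 0 < (4 - n) / (3 * c) by apply: divr_gt0; nra.
have Te : al = (4 - n) / (3 * c).
  apply/eqP; rewrite -(@eqrXn2 _ 2) //; try exact: ltW.
  apply/eqP; rewrite expr_div_n exprMn c2.
  have nn : n != 0 by rewrite gt_eqF.
  have nn4 : 4 - n != 0 by rewrite gt_eqF // subr_gt0.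
  have h4n : 4 * n != 0 by apply/eqP => H; lra.
  apply: (mulfI h4n).
  rewrite a2; field; by rewrite nn nn4.
split => //.
have nn4 : 4 - n != 0 by rewrite gt_eqF // subr_gt0.
have cn : c != 0 by rewrite gt_eqF.
apply: (@mulfI _ (4 - n)) => //; rewrite h Te; field.
by rewrite cn.
Qed.


Lemma unit_sum2 v : unitv v -> \sum_(k < 4) X v k ^+ 2 = 4/3.
Proof. by rewrite /unitv dotvv => H; lra. Qed.

Lemma two_valued v al be : unitv v -> be < al ->
  (forall k, X v k = al \/ X v k = be) ->
  exists K, condK K /\ v = vK K.
Proof.
move=> hu ba hv.
set K := [set k | X v k == al].
have hx k : X v k = be + ind K k * (al - be) + ind K k * 0.
  rewrite /ind inE; case: (hv k) => ->; rewrite ?eqxx; first by ring.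
  by rewrite (lt_eqF ba); ring.
have hs : 4 * be + #|K|%:R * (al - be) + #|K|%:R * 0 = 0.
  by have := sumX v; rewrite (eq_bigr _ (fun k _ => hx k)) sum_lin.
have hq : 4 * be ^+ 2 + #|K|%:R * (al ^+ 2 - be ^+ 2) + #|K|%:R * 0 = 4/3.
  have := unit_sum2 hu; rewrite (eq_bigr (fun k => be ^+ 2 + ind K k * (al ^+ 2 - be ^+ 2) + ind K k * 0)).
    by rewrite sum_lin.
  by move=> k _; rewrite hx /ind; case: ifP => _; ring.
have K4 := card_le4 K.
have N0 : #|K| <> 0%N.
  move=> E; rewrite E !mul0r !addr0 in hs hq.
  have be0 : be = 0 by lra.
  by rewrite be0 in hq; lra.
have N4 : #|K| <> 4%N.
  move=> E; rewrite E in hs hq.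
  have al0 : al = 0 by lra.
  rewrite al0 in hq; nra.
have n0 : 0 < #|K|%:R :> R by rewrite ltr0n lt0n; apply/eqP.
have n4 : #|K|%:R < 4 :> R.
  have : (#|K| < 4)%N by rewrite ltn_neqAle K4 andbT; apply/eqP.
  by rewrite -(ltr_nat R).
have e1 : #|K|%:R * al + (4 - #|K|%:R) * be = 0 :> R by lra.
have e2 : #|K|%:R * al ^+ 2 + (4 - #|K|%:R) * be ^+ 2 = 4/3 :> R by lra.
have [ea eb] := two_alg n0 n4 e1 e2 ba.
exists K; split.
  by rewrite /condK lt0n; apply/andP; split; [apply/eqP|rewrite -ltnS ltn_neqAle K4 andbT; apply/eqP].
apply: X_inj => k.
rewrite X_vK hx /ind; case: ifP => _.
  by rewrite ea; ring.
by rewrite eb; ring.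
Qed.


Lemma argmax (f : 'I_4 -> R) : exists k0, forall k, f k <= f k0.
Proof.
case: (@arg_maxP _ _ _ o0 xpredT f isT) => k0 _ H.
by exists k0 => k; apply: H.
Qed.

Lemma argmin (f : 'I_4 -> R) : exists k0, forall k, f k0 <= f k.
Proof.
case: (@arg_minP _ _ _ o0 xpredT f isT) => k0 _ H.
by exists k0 => k; apply: H.
Qed.

Lemma minmax v km kM : unitv v -> (forall k, X v km <= X v k) ->
  (forall k, X v k <= X v kM) -> X v km < X v kM.
Proof.
move=> hu hm hM; rewrite ltNge; apply/negP => H.
have E k : X v k = X v km by apply/eqP; rewrite eq_le hm (le_trans (hM k) H).
have := sumX v; have := unit_sum2 hu; rewrite !sum4 !E => h1 h2.
have h3 : X v km = 0 by lra.
by rewrite h3 expr0n /= in h1; lra.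
Qed.

Lemma odd_forward d v mu : odd d -> (3 <= d)%N -> unitv v -> eigenpair d v mu ->
  exists K, condK K /\ v = vK K.
Proof.
move=> od d3 hu [_ /eig_iff he].
have [kM hM] := argmax (X v); have [km hm] := argmin (X v).
have lt := minmax hu hm hM.
apply: (two_valued hu lt) => k.
case: (eqVneq (X v k) (X v kM)) => [->|h1]; first by left.
case: (eqVneq (X v k) (X v km)) => [->|h2]; first by right.
exfalso.
have l1 : X v km < X v k by rewrite lt_neqAle eq_sym h2 hm.
have l2 : X v k < X v kM by rewrite lt_neqAle h1 hM.
have em : ~~ odd d.-1 by case: d od d3 {he hM hm lt h1 h2 l1 l2}.
have m2 : (2 <= d.-1)%N by case: d od d3 {he hM hm lt h1 h2 l1 l2 em}.
apply: (no3 (lam := 3/4*mu) em m2 l1 l2); by rewrite !he.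
Qed.


Lemma oddN m z : odd m -> (- z) ^+ m = - z ^+ m.
Proof. by move=> om; rewrite exprNn -(signr_odd _ m) om expr1 mulN1r. Qed.

Lemma evenN m z : ~~ odd m -> (- z) ^+ m = z ^+ m.
Proof. by move=> om; rewrite exprNn -(signr_odd _ m) (negbTE om) expr0 mul1r. Qed.

Lemma g_val d lam ga x : odd d.-1 -> ga != 0 ->
  x ^+ d.-1 - lam * x = ga ^+ d.-1 - lam * ga ->
  g d ((x - ga) / (-4 * ga)) = (4 * lam * ga / ga ^+ d.-1) * ((x - ga) / (-4 * ga)).
Proof.
move=> om g0 e.
have gm : ga ^+ d.-1 != 0 by rewrite expf_neq0.
rewrite /g (_ : 4 * ((x - ga) / (-4 * ga)) - 1 = - (x / ga)); last by field.
rewrite oddN // -[-1]/(- (1 : R)) oddN // expr1n expr_div_n.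
have -> : x ^+ d.-1 = ga ^+ d.-1 - lam * ga + lam * x by lra.
by field; rewrite g0 gm.
Qed.

End S.
Arguments ind {R}.
Arguments sum_ind {R}.
Arguments sumv_ind {R}.
Arguments X_sumv {R}.
Arguments X_vK {R}.
Arguments card_le4 : clear implicits.
Set Implicit Arguments. Unset Strict Implicit.
Section S.
Variable R : realType.
Implicit Types (u w v : 'rV[R]_3) (a b x y p q s t lam c z ga al be : R).

Lemma card_pos (K : {set 'I_4}) k : k \in K -> 1 <= #|K|%:R :> R.
Proof. by move=> kK; rewrite ler1n; apply/card_gt0P; exists k. Qed.

Lemma three_valued d sstar v lam ga be al kg kb ka :
  ~~ odd d -> (4 <= d)%N -> is_sstar d sstar -> unitv v ->
  (forall k, X v k ^+ d.-1 - lam * X v k = X v o0 ^+ d.-1 - lam * X v o0) ->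
  ga < be -> be < al ->
  (forall k, [\/ X v k = ga, X v k = be | X v k = al]) ->
  X v kg = ga -> X v kb = be -> X v ka = al ->
  exists K1 K2 a b, condK2 d sstar K1 K2 a b /\ v = vK2 K1 K2 a b.
Proof.
move=> ed d4 [_ [hdec hinc]] hu he gb ba hv eg eb ea.
set K1 := [set k | X v k == be].
set K2 := [set k | X v k == al].
have hx k : X v k = ga + ind K1 k * (be - ga) + ind K2 k * (al - ga).
  rewrite /ind !inE; case: (hv k) => ->; rewrite ?eqxx.
  - by rewrite (lt_eqF gb) (lt_eqF (lt_trans gb ba)); ring.
  - by rewrite (lt_eqF ba); ring.
  - by rewrite (gt_eqF ba); ring.
have hs : 4 * ga + #|K1|%:R * (be - ga) + #|K2|%:R * (al - ga) = 0.
  by have := sumX v; rewrite (eq_bigr _ (fun k _ => hx k)) sum_lin.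
have hq : 4 * ga ^+ 2 + #|K1|%:R * (be ^+ 2 - ga ^+ 2) + #|K2|%:R * (al ^+ 2 - ga ^+ 2) = 4/3.
  have := unit_sum2 hu; rewrite (eq_bigr (fun k => ga ^+ 2 + ind K1 k * (be ^+ 2 - ga ^+ 2) + ind K2 k * (al ^+ 2 - ga ^+ 2))).
    by rewrite sum_lin.
  move=> k _; rewrite hx /ind !inE; case: (hv k) => ->; rewrite ?eqxx.
  - by rewrite (lt_eqF gb) (lt_eqF (lt_trans gb ba)); ring.
  - by rewrite (lt_eqF ba); ring.
  - by rewrite (gt_eqF ba); ring.
set n1 := #|K1|%:R in hs hq *; set n2 := #|K2|%:R in hs hq *.
have n1p : 1 <= n1 by apply: (@card_pos _ kb); rewrite inE eb.
have n2p : 1 <= n2 by apply: (@card_pos _ ka); rewrite inE ea.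
have g0 : ga < 0.
  have p1 : 0 < n1 * (be - ga) by apply: mulr_gt0; lra.
  have p2 : 0 < n2 * (al - ga) by apply: mulr_gt0; lra.
  lra.
have gn0 : ga != 0 by rewrite lt_eqF.
set a := (be - ga) / (-4 * ga); set b := (al - ga) / (-4 * ga).
have a0 : 0 < a by apply: divr_gt0; lra.
have ab : a < b by rewrite ltr_pM2r ?invr_gt0; lra.
have hab : n1 * a + n2 * b = 1.
  have -> : n1 * a + n2 * b = (n1 * (be - ga) + n2 * (al - ga)) / (-4 * ga) by rewrite /a /b; field; rewrite gn0.
  have -> : n1 * (be - ga) + n2 * (al - ga) = -4 * ga by lra.
  by rewrite divff //; apply/eqP => H; lra.
have od : odd d.-1 by apply: odd_pred => //; apply: leq_trans d4.
set kap := 4 * lam * ga / ga ^+ d.-1.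
have ga_ : g d a = kap * a by apply: g_val => //; rewrite -eb -eg !he.
have gb_ : g d b = kap * b by apply: g_val => //; rewrite -ea -eg !he.
have an0 : a != 0 by rewrite gt_eqF.
have bn0 : b != 0 by rewrite gt_eqF // (lt_trans a0 ab).
have gg : g d a / a = g d b / b by rewrite ga_ gb_ !mulfK.
exists K1, K2, a, b; split.
  have c1 : (0 < #|K1|)%N by apply/card_gt0P; exists kb; rewrite inE eb.
  have c2 : (0 < #|K2|)%N by apply/card_gt0P; exists ka; rewrite inE ea.
  have dis : [disjoint K1 & K2].
    rewrite disjoint_subset; apply/subsetP => k; rewrite !inE => /eqP h1.
    by apply/eqP => h2; have := ba; rewrite -h1 -h2 ltxx.
  have cu : (#|K1 :|: K2| <= 3)%N.
    have sub : K1 :|: K2 \subset [set~ kg].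
      apply/subsetP => k; rewrite !inE; apply: contraTN => /eqP ->.
      by rewrite eg (lt_eqF gb) (lt_eqF (lt_trans gb ba)).
    by have := subset_leq_card sub; rewrite cardsC1 card_ord.
  have bs : sstar < b.
    rewrite ltNge; apply/negP => h.
    by have := hdec a b a0 ab h; rewrite gg ltxx.
  have as_ : a <= sstar.
    rewrite leNgt; apply/negP => h.
    by have := hinc a b (ltW h) ab; rewrite gg ltxx.
  have b1 : b <= 1.
    have h1 : 0 < n1 * a by apply: mulr_gt0; lra.
    have h2 : b <= n2 * b.
      by rewrite -{1}(mul1r b) ler_wpM2r // ltW // (lt_trans a0 ab).
    lra.
  by do ![split => //].
have hs' : ga * (4 * ga + n1 * (be - ga) + n2 * (al - ga)) = 0 by rewrite hs mulr0.
have E : n1 * (be - ga) ^+ 2 + n2 * (al - ga) ^+ 2 = 4/3 + 4 * ga ^+ 2 by lra.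
have q : qK K1 K2 a b = 1 / (3 * ga ^+ 2).
  rewrite /qK -/n1 -/n2.
  have -> : 4 * a ^+ 2 * n1 + 4 * b ^+ 2 * n2 =
    (n1 * (be - ga) ^+ 2 + n2 * (al - ga) ^+ 2) / (4 * ga ^+ 2).
    by rewrite /a /b; field; rewrite gn0.
  by rewrite E; field; rewrite gn0.
have hN : Num.sqrt (qK K1 K2 a b / 3) = - (1 / (3 * ga)).
  rewrite q (_ : 1 / (3 * ga ^+ 2) / 3 = (1 / (3 * ga)) ^+ 2); last by field; rewrite gn0.
  rewrite sqrtr_sqr ltr0_norm //.
  by rewrite div1r invr_lt0; lra.
apply: X_inj => k.
rewrite /vK2 XZ XD !XZ !X_sumv hN hx -/n1 -/n2.
have -> : a * (4 / 3 * ind K1 k - 1 / 3 * n1) + b * (4 / 3 * ind K2 k - 1 / 3 * n2)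
  = 4/3 * (a * ind K1 k + b * ind K2 k) - (n1 * a + n2 * b) / 3 by ring.
by rewrite hab /a /b; field; rewrite gn0.
Qed.


Lemma even_forward d sstar v mu : ~~ odd d -> (4 <= d)%N -> is_sstar d sstar ->
  unitv v -> eigenpair d v mu ->
  (exists K, condK K /\ v = vK K) \/
  (exists K1 K2 a b, condK2 d sstar K1 K2 a b /\ v = vK2 K1 K2 a b).
Proof.
move=> ed d4 hs hu [_ /eig_iff he].
have [kM hM] := argmax (X v); have [km hm] := argmin (X v).
have lt := minmax hu hm hM.
have od : odd d.-1 by apply: odd_pred => //; apply: leq_trans d4.
have m3 : (3 <= d.-1)%N by rewrite -subn1 leq_subRL // (leq_trans _ d4).
case: (boolP [exists k, (X v k != X v kM) && (X v k != X v km)]).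
- case/existsP => k1 /andP [h1 h2].
  have l1 : X v km < X v k1 by rewrite lt_neqAle eq_sym h2 hm.
  have l2 : X v k1 < X v kM by rewrite lt_neqAle h1 hM.
  right; apply: (three_valued (lam := 3/4*mu) ed d4 hs hu he l1 l2) => //.
  move=> k.
  case: (eqVneq (X v k) (X v kM)) => [->|g1]; first by constructor 3.
  case: (eqVneq (X v k) (X v km)) => [->|g2]; first by constructor 1.
  case: (eqVneq (X v k) (X v k1)) => [->|g3]; first by constructor 2.
  exfalso.
  have k1' : X v km < X v k by rewrite lt_neqAle eq_sym g2 hm.
  have k2' : X v k < X v kM by rewrite lt_neqAle g1 hM.
  case: (ltgtP (X v k) (X v k1)) => [c|c|c]; last by rewrite c eqxx in g3.
  + by apply: (no4 (lam := 3/4*mu) od m3 k1' c l2); rewrite !he.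
  + by apply: (no4 (lam := 3/4*mu) od m3 l1 c k2'); rewrite !he.
- rewrite negb_exists => /forallP H.
  left; apply: (two_valued hu lt) => k.
  have := H k; rewrite negb_and !negbK.
  by case/orP => /eqP ->; [left|right].
Qed.

End S.
Set Implicit Arguments. Unset Strict Implicit.
Section S.
Variable R : realType.
Implicit Types (u w v : 'rV[R]_3) (a b x y p q s t lam c z ga al be : R).

Local Notation rt := (Num.sqrt (3:R)).

Lemma condK_n (K : {set 'I_4}) : condK K -> 0 < #|K|%:R :> R /\ #|K|%:R < 4 :> R.
Proof.
rewrite /condK => /andP [h1 h2]; split; first by rewrite ltr0n.
by rewrite ltr_nat.
Qed.

Lemma den_eq k (K : {set 'I_4}) : condK K ->
  denK k.+2 K = 3 ^+ k.+1 * cK #|K|%:R ^+ k :> R.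
Proof.
move=> /condK_n [n0 n4]; set n := #|K|%:R in n0 n4 *.
rewrite /denK (_ : (k.+2 - 2 = k)%N); last by rewrite subSS subSS subn0.
have nn : 0 <= n * (4 - n) by nra.
rewrite /cK (sqrtrM _ nn) sqrtrV //.
have r0 := rt_neq0 R.
have r2 := rt2 R.
set r := Num.sqrt 3 in r0 r2 *.
rewrite -[3 ^+ k.+1]/((3:R) ^+ k.+1) -r2 -exprM (_ : (2 * k.+1)%N = (k.+2 + k)%N); last by rewrite mulSn mul1n addnS addSn.
rewrite exprD exprMn exprVn.
set s := Num.sqrt (n * (4 - n)).
by field; rewrite expf_neq0.
Qed.

Definition muK k (K : {set 'I_4}) : R :=
  let n := #|K|%:R in ((4 - n) ^+ k.+1 - (- n) ^+ k.+1) / (3 ^+ k.+1 * cK n ^+ k).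

Lemma vK_eigen k K : condK K -> Tapply k.+2 (vK K) = muK k K *: vK K.
Proof.
move=> hK; have [n0 n4] := condK_n hK.
apply/eig_iff => j /=.
set n := #|K|%:R in n0 n4 *.
have c0 := cK_gt0 n0 n4.
have cn : cK n != 0 by rewrite gt_eqF.
suff H : forall j, X (vK K) j ^+ k.+1 - 3/4 * muK k K * X (vK K) j =
   ((4 - n) / (3 * cK n)) ^+ k.+1 - 3/4 * muK k K * ((4 - n) / (3 * cK n)).
  by rewrite !H.
move=> i; rewrite X_vK -/n; case: ifP => // _.
rewrite /muK -/n !expr_div_n !exprMn (exprS (cK n)).
by field; rewrite cn !expf_neq0 // pnatr_eq0.
Qed.


Lemma mu_odd_eq k K : condK K -> ~~ odd k.+1 -> mu_odd k.+2 K = muK k K.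
Proof.
move=> hK om; rewrite /mu_odd /muK den_eq //= evenN //.
Qed.

Lemma mu_even_eq k K : condK K -> odd k.+1 -> mu_even k.+2 K = muK k K.
Proof.
by move=> hK om; rewrite /mu_even /muK den_eq //= oddN // opprK.
Qed.

Lemma vK2_eigen k sstar K1 K2 a b : odd k.+1 -> condK2 k.+2 sstar K1 K2 a b ->
  0 < qK K1 K2 a b ->
  Tapply k.+2 (vK2 K1 K2 a b) = mu_even2 k.+2 K1 K2 a b *: vK2 K1 K2 a b.
Proof.
move=> om [c1 [c2 [dis [cu [[a0 [as_ [bs b1]]] [hab gg]]]]]] q0.
set n1 := #|K1|%:R in hab *; set n2 := #|K2|%:R in hab *.
set q := qK K1 K2 a b in q0 *.
have sq0 : 0 < Num.sqrt q by rewrite sqrtr_gt0.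
have sq2 : Num.sqrt q ^+ 2 = q by rewrite sqr_sqrtr // ltW.
have r0 := rt_neq0 R.
have r2 := rt2 R.
set sq := Num.sqrt q in sq0 sq2 *.
set r := Num.sqrt 3 in r0 r2 *.
set W := r * sq.
have W0 : W != 0 by rewrite mulf_neq0 // gt_eqF.
have hN : Num.sqrt (q / 3) = W / 3.
  rewrite (sqrtrM _ (ltW q0)) sqrtrV // -/sq -/r.
  transitivity (r * sq / r ^+ 2); first by field.
  by rewrite r2.
have hX j : X (vK2 K1 K2 a b) j = (4 * (a * ind K1 j + b * ind K2 j) - 1) / W.
  rewrite /vK2 -/q hN XZ XD !XZ !X_sumv -/n1 -/n2.
  have -> : a * (4 / 3 * ind K1 j - 1 / 3 * n1) + b * (4 / 3 * ind K2 j - 1 / 3 * n2)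
    = 4/3 * (a * ind K1 j + b * ind K2 j) - (n1 * a + n2 * b) / 3 by ring.
  by rewrite hab; field.
have an0 : a != 0 by rewrite gt_eqF.
have bn0 : b != 0 by rewrite gt_eqF // (lt_trans a0 (le_lt_trans as_ bs)).
set kap := g k.+2 a / a.
have m1 : (- 1) ^+ k.+1 = - 1 :> R by rewrite oddN // expr1n.
have hga : (4 * a - 1) ^+ k.+1 = kap * a - 1.
  by rewrite /kap mulfVK // /g /= m1; ring.
have hgb : (4 * b - 1) ^+ k.+1 = kap * b - 1.
  by rewrite /kap gg mulfVK // /g /= m1; ring.
have qW : q = W ^+ 2 / 3 by rewrite exprMn r2 sq2; field.
have hmu : mu_even2 k.+2 K1 K2 a b = kap * W / (3 * W ^+ k.+1).
  rewrite /mu_even2 -/n1 -/n2 -/q -/sq -/r -exprMn -/W.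
  rewrite (exprSr (4 * a - 1)) (exprSr (4 * b - 1)) hga hgb.
  have -> : n1 * ((kap * a - 1) * (4 * a - 1)) + n2 * ((kap * b - 1) * (4 * b - 1)) + 4 - n1 - n2
     = kap * q + (kap + 4) * (1 - (n1 * a + n2 * b)) by rewrite /q /qK -/n1 -/n2; ring.
  rewrite hab subrr mulr0 addr0 qW.
  by rewrite (exprSr W k.+1); field; rewrite W0 expf_neq0.
have Wm : W ^+ k.+1 != 0 by rewrite expf_neq0.
have phi c : (4 * c - 1) ^+ k.+1 = kap * c - 1 ->
  ((4 * c - 1) / W) ^+ k.+1 - 3/4 * mu_even2 k.+2 K1 K2 a b * ((4 * c - 1) / W)
  = (kap / 4 - 1) / W ^+ k.+1.
  move=> hc; rewrite expr_div_n hc hmu.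
  by field; rewrite W0 Wm.
have all j : X (vK2 K1 K2 a b) j ^+ k.+1 - 3/4 * mu_even2 k.+2 K1 K2 a b * X (vK2 K1 K2 a b) j
   = (kap / 4 - 1) / W ^+ k.+1.
  rewrite hX; apply: phi; rewrite /ind.
  case: ifP => h1; case: ifP => h2.
  - by move: (disjointFr dis h1); rewrite h2.
  - by rewrite mulr1 mulr0 addr0.
  - by rewrite mulr0 mulr1 add0r.
  - by rewrite !mulr0 addr0 mulr0 sub0r m1; ring.
by apply/eig_iff => j /=; rewrite !all.
Qed.

End S.
Set Implicit Arguments. Unset Strict Implicit.
Section S.
Variable R : realType.
Implicit Types (u w v : 'rV[R]_3) (a b x y p q s t lam c z ga al be : R).

Local Notation rt := (Num.sqrt (3:R)).

Lemma unit_neq0 v : unitv v -> v != 0.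
Proof.
move=> hu; apply/eqP => v0; move: hu; rewrite /unitv v0 dot0l => H.
by have : (0:R) = 1 := H; lra.
Qed.

Lemma qK_pos v K1 K2 a b : unitv v -> v = vK2 K1 K2 a b -> 0 < qK K1 K2 a b.
Proof.
move=> hu ev; rewrite ltNge; apply/negP => h.
have := unit_neq0 hu; rewrite ev /vK2 ler0_sqrtr ?invr0 ?scale0r ?eqxx //.
by apply: mulr_le0_ge0 => //; rewrite invr_ge0; lra.
Qed.

Lemma Xw j k : X (wzero j) k =
  rt / 3 * (if (k == o0) || (k == lift ord0 j) then 1 else -1).
Proof.
rewrite /wzero XZ XD !Xvk sq43.
have r0 := rt_neq0 R; have r2 := rt2 R.
by case: (ord3P j) => [->|[->|->]]; case: (ord4P k) => [->|[->|[->|->]]] /=;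
  field.
Qed.


Lemma zero_forward v : (forall k, X v k = rt / 3 \/ X v k = - (rt / 3)) ->
  \sum_(k < 4) X v k = 0 -> exists j, v = wzero j \/ v = - wzero j.
Proof.
move=> hv hs; rewrite sum4 in hs.
have t0 : 0 < rt / 3 by apply: divr_gt0 => //; apply: rt_gt0.
case: (hv o0) => e0; case: (hv o1) => e1; case: (hv o2) => e2; case: (hv o3) => e3;
  rewrite e0 e1 e2 e3 in hs; try (exfalso; lra).
all: [> exists 0; left | exists 1; left | exists 2; left | exists 2; right | exists 1; right | exists 0; right].
all: apply: X_inj => k; rewrite ?XN Xw; case: (ord4P k) => [->|[->|[->|->]]] /=; rewrite ?e0 ?e1 ?e2 ?e3; lra.
Qed.


Lemma cond_cases (K : {set 'I_4}) : condK K ->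
  [\/ #|K| = 1%N, #|K| = 2%N | #|K| = 3%N].
Proof.
rewrite /condK; case: #|K| => [|[|[|[|N]]]] //= _; by [constructor 1|constructor 2|constructor 3].
Qed.

Lemma three_pow m : 1 < (3:R) ^+ m.+1.
Proof. by rewrite exprn_egt1 //; lra. Qed.

Lemma mu_odd0 k K : condK K -> ~~ odd k.+1 -> (mu_odd (R:=R) k.+2 K = 0 <-> #|K| = 2%N).
Proof.
move=> hK om; have [n0 n4] := @condK_n R K hK.
have c0 := cK_gt0 n0 n4.
have D0 : (3 ^+ k.+1 * cK (#|K|%:R : R) ^+ k : R) != 0.
  by rewrite mulf_neq0 // expf_neq0 // gt_eqF.
rewrite mu_odd_eq // /muK evenN //; split.
- move/eqP; rewrite mulf_eq0 invr_eq0 (negbTE D0) orbF subr_eq0 => /eqP E.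
  case: (cond_cases hK) => N //; rewrite N in E.
  + have := three_pow k; rewrite (_ : 4 - 1%:R = 3 :> R) in E; last by lra.
    by rewrite E expr1n ltxx.
  + have := three_pow k; rewrite (_ : 4 - 3%:R = 1 :> R) in E; last by lra.
    by rewrite -E expr1n ltxx.
- move=> N; rewrite N (_ : 4 - 2%:R = 2%:R :> R); last by lra.
  by rewrite subrr mul0r.
Qed.

End S.
Set Implicit Arguments. Unset Strict Implicit.
Section S.
Variable R : realType.
Implicit Types (u w v : 'rV[R]_3) (a b x y p q s t lam c z ga al be : R).

Local Notation rt := (Num.sqrt (3:R)).

Lemma eig0_X d v : ~~ odd d.-1 -> (0 < d.-1)%N -> unitv v -> eigenpair d v 0 ->
  forall k, X v k = rt / 3 \/ X v k = - (rt / 3).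
Proof.
move=> em m0 hu [_ /eig_iff he].
have E k : `|X v k| = `|X v o0|.
  have := he k; rewrite !mulr0 !mul0r !subr0 => h.
  by apply/eqP; rewrite -(eqrXn2 m0) ?normr_ge0 // -!normrX h.
have N2 l : X v l ^+ 2 = `|X v l| ^+ 2 by rewrite real_normK // num_real.
have S := unit_sum2 hu; rewrite sum4 !N2 !E in S.
have t0 : 0 <= rt / 3 by apply: divr_ge0 => //; apply: ltW; apply: rt_gt0.
have T : `|X v o0| = rt / 3.
  apply/eqP; rewrite -(eqrXn2 (isT : (0 < 2)%N)) ?normr_ge0 //.
  by rewrite expr_div_n rt2; apply/eqP; lra.
move=> k; have := E k; rewrite T.
by case: (lerP 0 (X v k)) => h; [rewrite ger0_norm // => ->; left | rewrite ltr0_norm // => <-; rewrite opprK; right].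
Qed.

Lemma eig0_back d v j : ~~ odd d.-1 -> unitv v -> (v = wzero j \/ v = - wzero j) ->
  eigenpair d v 0.
Proof.
move=> em hu ev; split; first exact: unit_neq0.
apply/eig_iff => k; rewrite !mulr0 !mul0r !subr0.
have H l : X v l ^+ d.-1 = (rt / 3) ^+ d.-1.
  case: ev => ->; rewrite ?XN Xw; case: ifP => _; rewrite ?mulr1 ?mulrN1 ?evenN //.
by rewrite !H.
Qed.

Lemma wzero_u j : @wzero R j = (1/2) *: (@uk R o0 + @uk R (lift ord0 j)).
Proof.
rewrite /wzero !vk_uk -scalerDr scalerA sq43; congr (_ *: _).
by field; apply: rt_neq0.
Qed.

Lemma rowfree_w : row_free (\matrix_(j < 3) (@wzero R j : 'rV_3)).
Proof.
have E : (\matrix_(j < 3) (@wzero R j : 'rV_3)) =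
   \matrix_(j < 3) ((1/2) *: (@uk R o0 + @uk R (lift ord0 j)) : 'rV_3).
  by apply/matrixP => i l; rewrite [LHS]mxE [RHS]mxE wzero_u.
rewrite E row_free_unit.
set M := \matrix_(j < 3) _.
suff H : M *m M^T = 1%:M by case: (mulmx1_unit H).
apply/matrixP => i j; rewrite !mxE sum3 !mxE.
by case: (ord3P i) => [->|[->|->]]; case: (ord3P j) => [->|[->|->]] /=; lra.
Qed.

End S.

Unset Implicit Arguments. Set Strict Implicit.

Theorem mainTheorem10 (R : realType) (d : nat) (hd : (2 <= d)%N) :
  (* (i) *)
  (d = 2%N -> forall v : 'rV[R]_3, unitv v -> eigenpair d v (4 / 3))
  /\
  (* (ii) *)
  ((3 <= d)%N -> odd d ->
     (forall v : 'rV[R]_3, unitv v ->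
        ((exists mu, eigenpair d v mu) <->
         (exists K : {set 'I_4}, condK K /\ v = vK K)) /\
        (forall K : {set 'I_4}, condK K -> v = vK K ->
           eigenpair d v (mu_odd d K))) /\
     (forall K : {set 'I_4}, condK K -> (mu_odd (R:=R) d K = 0 <-> #|K| = 2%N)) /\
     (forall v : 'rV[R]_3, unitv v ->
        (eigenpair d v 0 <-> exists j : 'I_3, v = wzero j \/ v = - wzero j)) /\
     row_free (\matrix_(j < 3) (wzero j : 'rV[R]_3)))
  /\
  (* (iii) *)
  ((4 <= d)%N -> ~~ odd d -> forall sstar : R, is_sstar d sstar ->
     forall v : 'rV[R]_3, unitv v ->
       ((exists mu, eigenpair d v mu) <->
        ((exists K : {set 'I_4}, condK K /\ v = vK K) \/
         (exists (K1 K2 : {set 'I_4}) (a b : R),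
             condK2 d sstar K1 K2 a b /\ v = vK2 K1 K2 a b))) /\
       (forall K : {set 'I_4}, condK K -> v = vK K ->
          eigenpair d v (mu_even d K) /\ 0 < mu_even (R:=R) d K) /\
       (forall (K1 K2 : {set 'I_4}) (a b : R),
          condK2 d sstar K1 K2 a b -> v = vK2 K1 K2 a b ->
          eigenpair d v (mu_even2 d K1 K2 a b) /\ 0 < mu_even2 d K1 K2 a b)).
Proof.
split; [|split].
- move=> -> v hu; split; first exact: unit_neq0.
  rewrite /Tapply /=.
  under eq_bigr do rewrite expr1.
  exact: sumXvk.
- move=> d3 od.
  have [k ek] : exists k, d = k.+2 by exists d.-2; case: d hd {d3 od} => [|[|d]].
  subst d.
  have om : ~~ odd k.+1 by move: od => /=; rewrite negbK.
  split; [|split; [|split]].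
  + move=> v hu.
    have fw K : condK K -> v = vK K -> eigenpair k.+2 v (mu_odd k.+2 K).
      move=> hK ev; split; first exact: unit_neq0.
      by rewrite ev mu_odd_eq // vK_eigen.
    split => //; split.
    * by move=> [mu he]; apply: (odd_forward od d3 hu he).
    * by move=> [K [hK ev]]; exists (mu_odd k.+2 K); apply: fw.
  + by move=> K hK; apply: mu_odd0.
  + move=> v hu; split.
    * move=> he; apply: zero_forward; last exact: sumX.
      exact: (eig0_X (d:=k.+2) om isT hu he).
    * by move=> [j ej]; apply: (eig0_back (d:=k.+2) om hu ej).
  + exact: rowfree_w.
- move=> d4 ed sstar hs v hu.
  have [k ek] : exists k, d = k.+2 by exists d.-2; case: d hd {d4 ed hs} => [|[|d]].
  subst d.
  have om : odd k.+1 by move: ed => /=; rewrite negbK.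
  have fa K : condK K -> v = vK K -> eigenpair k.+2 v (mu_even k.+2 K) /\ 0 < mu_even (R:=R) k.+2 K.
    move=> hK ev; split.
      split; first exact: unit_neq0.
      by rewrite ev mu_even_eq // vK_eigen.
    have [n0 n4] := @condK_n R K hK.
    rewrite /mu_even den_eq //; apply: divr_gt0.
      by apply: addr_gt0; apply: exprn_gt0; lra.
    by apply: mulr_gt0; apply: exprn_gt0; [lra | apply: cK_gt0].
  have fb K1 K2 a b : condK2 k.+2 sstar K1 K2 a b -> v = vK2 K1 K2 a b ->
      eigenpair k.+2 v (mu_even2 k.+2 K1 K2 a b) /\ 0 < mu_even2 k.+2 K1 K2 a b.
    move=> hc ev; have q0 := qK_pos hu ev; split.
      split; first exact: unit_neq0.
      by rewrite ev; apply: (vK2_eigen om hc).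
    case: hc => [c1 [c2 [dis [cu _]]]].
    have cs : (#|K1| + #|K2| <= 3)%N.
      by move: cu; rewrite cardsU (disjoint_setI0 dis) cards0 subn0.
    have cs' : #|K1|%:R + #|K2|%:R <= 3 :> R by rewrite -natrD ler_nat.
    rewrite /mu_even2; apply: divr_gt0.
      have e1 : 0 <= #|K1|%:R * (4 * a - 1) ^+ k.+2 :> R.
        by apply: mulr_ge0; rewrite ?ler0n ?exprn_even_ge0 //.
      have e2 : 0 <= #|K2|%:R * (4 * b - 1) ^+ k.+2 :> R.
        by apply: mulr_ge0; rewrite ?ler0n ?exprn_even_ge0 //.
      lra.
    apply: mulr_gt0; apply: exprn_gt0; first exact: rt_gt0.
    by rewrite sqrtr_gt0.
  split; [|split] => //.
  split.
  + by move=> [mu he]; apply: (even_forward ed d4 hs hu he).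
  + case => [[K [hK ev]] | [K1 [K2 [a [b [hc ev]]]]]].
    * by exists (mu_even k.+2 K); case: (fa K hK ev).
    * by exists (mu_even2 k.+2 K1 K2 a b); case: (fb K1 K2 a b hc ev).
Qed.
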